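(* If a polynomial dynamical system $\frac{d\mathbf{x}}{dt}=f(\mathbf{x})$ on $\mathbb{R}^d_{\ge 0}$ is weakly reversible, then it is generated by a weakly reversible reaction network whose set of source nodes is the set of exponent vectors of the monomials of $f$.
   Context: A reaction network (E-graph) $\mathcal{G}=(\mathcal{V},\mathcal{E})$ is a finite directed graph whose nodes are distinct elements of a finite set $Y\subset\mathbb{R}^d_{\ge 0}$, with $\mathcal{V}\neq\emptyset$, every node incident to at least one edge, and no edge from a node to itself. For an edge $e$, $\mathbf{s}(e)$ is its source node, $\mathbf{t}(e)$ its target, $\mathbf{v}(e)=\mathbf{t}(e)-\mathbf{s}(e)$. Given positive rate constants $(k_e)$, $\mathcal{G}$ generates the system $\frac{d\mathbf{x}}{dt}=\sum_{e}k_e\mathbf{x}^{\mathbf{s}(e)}\mathbf{v}(e)$ ($\mathbf{x}^{\mathbf{y}}=\prod_i x_i^{y_i}$, $0^0=1$). $\mathcal{G}$ is weakly reversible if every edge lies in a directed cycle. A polynomial dynamical system is weakly reversible if it is generated, for some positive rate constants, by some weakly reversible network. The monomials of $f$ are those $\mathbf{x}^{\mathbf{y}}$ appearing in $f$ with nonzero (vector) coefficient. *)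

(* Defs.v *)
From HB Require Import structures.
From mathcomp Require Import all_boot all_order all_algebra.
From mathcomp Require Import finmap.
From mathcomp Require Import reals exp.
Set Implicit Arguments. Unset Strict Implicit. Unset Printing Implicit Defensive.
Import Order.TTheory GRing.Theory Num.Theory.
Local Open Scope ring_scope.
Local Open Scope fset_scope.

Section Defs.
Variables (R : realType) (d : nat).

Notation vec := 'rV[R]_d.

Definition nonneg_vec (x : vec) : bool := [forall i, 0 <= x 0 i].

(* generalized monomial x^y = prod_i x_i^{y_i}, with 0^0 = 1 (powR) *)
Definition monom (x y : vec) : R := \prod_(i < d) powR (x 0 i) (y 0 i).

Record network := Network { nodes : {fset vec} ; edges : {fset vec * vec} }.

Definition src (e : vec * vec) : vec := e.1.
Definition tgt (e : vec * vec) : vec := e.2.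

Definition is_network (G : network) : Prop :=
  [/\ nodes G != fset0,
      (forall y, y \in nodes G -> nonneg_vec y),
      (forall e, e \in edges G -> src e \in nodes G /\ tgt e \in nodes G),
      (forall e, e \in edges G -> src e != tgt e) &
      (forall y, y \in nodes G ->
         exists2 e, e \in edges G & (src e == y) || (tgt e == y))].

Definition reaches (G : network) (a b : vec) : Prop :=
  exists p : seq vec,
    path (fun u v => (u, v) \in edges G) a p /\ last a p = b.

Definition weakly_reversible (G : network) : Prop :=
  forall e, e \in edges G -> reaches G (tgt e) (src e).

Definition generated_field (G : network) (k : vec * vec -> R) (x : vec) : vec :=
  \sum_(e <- edges G) (k e * monom x (src e)) *: (tgt e - src e).

Definition generates (G : network) (k : vec * vec -> R) (f : vec -> vec) : Prop :=
  (forall e, e \in edges G -> 0 < k e) /\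
  (forall x, nonneg_vec x -> generated_field G k x = f x).

Definition poly_field (S : {fset vec}) (c : vec -> vec) (x : vec) : vec :=
  \sum_(y <- S) monom x y *: c y.

Definition monomial_exponents (S : {fset vec}) (c : vec -> vec) : {fset vec} :=
  [fset y in S | c y != 0].

Definition source_nodes (G : network) : {fset vec} := [fset src e | e in edges G].

Definition weakly_reversible_system (f : vec -> vec) : Prop :=
  exists G k, [/\ is_network G, weakly_reversible G & generates G k f].

End Defs.

(* Main.v *)
Require Import Defs.
From HB Require Import structures.
From mathcomp Require Import all_boot all_order all_algebra.
From mathcomp Require Import finmap.
From mathcomp Require Import reals exp.
From mathcomp Require Import ring lra.
Set Implicit Arguments. Unset Strict Implicit. Unset Printing Implicit Defensive.
Import Order.TTheory GRing.Theory Num.Theory.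
Local Open Scope ring_scope.
Local Open Scope fset_scope.

Local Close Scope fset_scope.
Section LI.
Variables (R : realType) (d : nat).
Notation vec := 'rV[R]_d.

Definition sc (i : 'I_d) (x : vec) : vec := \row_j (if j == i then 2 * x 0 j else x 0 j).

Lemma sc_nonneg i x : nonneg_vec x -> nonneg_vec (sc i x).
Proof.
move=> /forallP H; apply/forallP => j; rewrite mxE; case: ifP => _ //.
by rewrite mulr_ge0.
Qed.

Lemma monom_sc i x y : nonneg_vec x ->
  monom (sc i x) y = powR 2 (y 0 i) * monom x y.
Proof.
move=> /forallP H; rewrite /monom (bigD1 i) //= [in RHS](bigD1 i) //= mulrA.
rewrite mxE eqxx powRM //; congr (_ * _); apply: eq_bigr => j /negPf ji.
by rewrite mxE ji.
Qed.

Lemma pow2_inj a b : powR (2:R) a = powR 2 b -> a = b.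
Proof.
rewrite /powR pnatr_eq0 /= => /expR_inj /eqP.
rewrite -subr_eq0 -mulrBl mulf_eq0 => /orP[]; first by rewrite subr_eq0 => /eqP.
by rewrite gt_eqF // ln_gt0 // ltr1n.
Qed.

Definition one : vec := const_mx 1.
Lemma one_nonneg : nonneg_vec one.
Proof. by apply/forallP => j; rewrite mxE. Qed.
Lemma monom_one y : monom one y = 1.
Proof. by rewrite /monom big1 // => j _; rewrite mxE powR1. Qed.

Lemma size_filter_lt (T : eqType) (P : pred T) s x : x \in s -> ~~ P x ->
  (size (filter P s) < size s)%N.
Proof.
move=> xs nPx; rewrite size_filter -(count_predC P s) -[X in (X < _)%N]addn0.
by rewrite ltn_add2l -has_count; apply/hasP; exists x.
Qed.

Lemma LI_aux n (s : seq vec) (g : vec -> vec) : (size s <= n)%N -> uniq s ->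
  (forall x, nonneg_vec x -> \sum_(y <- s) monom x y *: g y = 0) ->
  forall y, y \in s -> g y = 0.
Proof.
elim: n s g => [|n IH] s g; first by case: s.
move=> Hs us H y ys.
case: (boolP (has (fun z => z != y) s)) => [/hasP[y1 y1s ny1]|/hasPn Hall]; last first.
  have := H one one_nonneg; rewrite (bigD1_seq y) //= monom_one scale1r.
  rewrite big1_seq ?addr0 // => z /andP[zy zs].
  by move: (Hall z zs); rewrite zy.
have [i Hi] : exists i, y1 0 i != y 0 i.
  case: (boolP [exists i, y1 0 i != y 0 i]) => [/existsP[i Hi]|/existsPn Hn].
    by exists i.
  by move/negP: ny1; case; apply/eqP/rowP => j; apply/eqP; move: (Hn j); rewrite negbK.
pose a := y 0 i.
have H1 : forall z : vec, z \in s -> z 0 i != a -> g z = 0.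
  pose g1 := fun z : vec => (powR 2 (z 0 i) - powR 2 a) *: g z.
  have Hz : forall z : vec, z \in filter (predC1 y) s -> g1 z = 0.
    apply: (IH _ g1).
    - by rewrite -ltnS (leq_trans _ Hs) // (size_filter_lt ys) //= eqxx.
    - by rewrite filter_uniq.
    move=> x xn; rewrite big_filter big_rmcond_in; last first.
      by move=> z _; rewrite /= negbK => /eqP ->; rewrite /g1 subrr scale0r scaler0.
    rewrite /g1.
    under eq_bigr do rewrite scalerBl scalerBr !scalerA.
    rewrite sumrB.
    under eq_bigr do rewrite mulrC -monom_sc //.
    rewrite (H _ (sc_nonneg i xn)).
    under eq_bigr do rewrite mulrC -scalerA.
    by rewrite -scaler_sumr H // scaler0 subrr.
  move=> z zs za; have := Hz z; rewrite mem_filter zs /= andbT.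
  case: (eqVneq z y) => [zy|zy]; first by move: za; rewrite zy eqxx.
  move=> /(_ isT) /eqP; rewrite /g1 scaler_eq0 subr_eq0 => /orP[/eqP/pow2_inj E|/eqP //].
  by move: za; rewrite E eqxx.
apply: (IH (filter (fun z : vec => z 0 i == a) s) g).
- by rewrite -ltnS (leq_trans _ Hs) // (size_filter_lt y1s).
- by rewrite filter_uniq.
- move=> x xn; rewrite big_filter big_rmcond_in ?H // => z zs za.
  by rewrite H1 // scaler0.
by rewrite mem_filter eqxx.
Qed.

Lemma LI (s : seq vec) (g : vec -> vec) : uniq s ->
  (forall x, nonneg_vec x -> \sum_(y <- s) monom x y *: g y = 0) ->
  forall y, y \in s -> g y = 0.
Proof. exact: LI_aux. Qed.
End LI.

Local Close Scope fset_scope.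
Section Net.
Variables (R : realType) (d : nat).
Notation vec := 'rV[R]_d.
Implicit Types (kap : vec * vec -> R) (V : {fset vec}).

Definition wk V kap (a : vec) : vec := \sum_(b <- V) kap (a, b) *: (b - a).

Inductive rch kap : vec -> vec -> Prop :=
| rch0 a : rch kap a a
| rchS a m b : 0 < kap (a, m) -> rch kap m b -> rch kap a b.

Lemma rch_trans kap a b c : rch kap a b -> rch kap b c -> rch kap a c.
Proof. by elim=> // u m v H _ IH /IH; apply: rchS. Qed.

Lemma rch_first kap u v : rch kap u v -> u != v -> exists m, 0 < kap (u, m).
Proof. by case=> [a|a m b H _]; [rewrite eqxx | exists m]. Qed.

Definition Inv V kap0 kap : Prop :=
  [/\ (forall e, 0 <= kap e), (forall a, kap (a, a) = 0),
      (forall a b, 0 < kap (a, b) -> a \in V /\ b \in V),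
      (forall a b, 0 < kap (a, b) -> rch kap b a) &
      (forall z, z \in V -> wk V kap z = wk V kap0 z)].

Definition Ksum V kap y := \sum_(b <- V) kap (y, b).

Definition remk V kap (y : vec) (e : vec * vec) : R :=
  if (e.1 == y) || (e.2 == y) || (e.1 == e.2) then 0
  else kap e + kap (e.1, y) * kap (y, e.2) / Ksum V kap y.

Lemma Ksum_ge V kap y b : (forall e, 0 <= kap e) -> b \in V -> kap (y, b) <= Ksum V kap y.
Proof.
move=> k0 bV; rewrite /Ksum (bigD1_seq b) //= lerDl.
by apply: sumr_ge0 => i _.
Qed.

Lemma Ksum_ge0 V kap y : (forall e, 0 <= kap e) -> 0 <= Ksum V kap y.
Proof. by move=> k0; apply: sumr_ge0. Qed.

Section Step.
Variables (V : {fset vec}) (kap : vec * vec -> R) (y : vec).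
Hypotheses (k0 : forall e, 0 <= kap e) (kirr : forall a, kap (a, a) = 0)
  (ksupp : forall a b, 0 < kap (a, b) -> a \in V /\ b \in V).
Let K := Ksum V kap y.
Let kap' := remk V kap y.

Lemma remk_ge0 e : 0 <= kap' e.
Proof.
rewrite /kap' /remk; case: ifP => // _.
by rewrite addr_ge0 // divr_ge0 ?mulr_ge0 // Ksum_ge0.
Qed.

Lemma remk_pos a b : a != y -> b != y -> a != b -> 0 < kap (a, b) -> 0 < kap' (a, b).
Proof.
move=> ay b_y ab H; rewrite /kap' /remk /= (negPf ay) (negPf b_y) (negPf ab) /=.
by rewrite ltr_wpDr // divr_ge0 ?mulr_ge0 // Ksum_ge0.
Qed.

Lemma remk_pos2 a b : a != y -> b != y -> a != b -> 0 < kap (a, y) -> 0 < kap (y, b) ->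
  0 < kap' (a, b).
Proof.
move=> ay b_y ab H1 H2; rewrite /kap' /remk /= (negPf ay) (negPf b_y) (negPf ab) /=.
rewrite ltr_wpDl // divr_gt0 ?mulr_gt0 //.
by apply: (lt_le_trans H2); apply: Ksum_ge => //; case: (ksupp H2).
Qed.

Lemma rch_lift m v : rch kap m v -> v != y ->
  (m != y -> rch kap' m v) /\ (forall u, u != y -> 0 < kap (u, m) -> rch kap' u v).
Proof.
elim=> [a|a m' b H Hr IH] vy.
  split; first by move=> _; apply: rch0.
  move=> u uy H; apply: (rchS (m := a)); last by apply: rch0.
  apply: remk_pos => //; apply/eqP => ua; move: H; rewrite ua kirr ltxx.
  by [].
have [IH1 IH2] := IH vy.
have P1 : a != y -> rch kap' a b.
  move=> ay; case: (eqVneq m' y) => [E|m'y]; first by apply: IH2 => //; rewrite -E.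
  apply: (rchS (m := m')) (IH1 m'y); apply: (remk_pos ay m'y _ H).
  by apply/eqP => E; move: H; rewrite E kirr ltxx.
split => // u uy Hu.
case: (eqVneq a y) => [E|ay]; last first.
  apply: (rchS (m := a)) (P1 ay); apply: (remk_pos uy ay _ Hu).
  by apply/eqP => E; move: Hu; rewrite E kirr ltxx.
have m'y : m' != y by apply/eqP => E'; move: H; rewrite E E' kirr ltxx.
case: (eqVneq m' u) => [<-|m'u]; first by apply: IH1.
apply: (rchS (m := m')) (IH1 m'y); apply: (remk_pos2 uy m'y).
- by rewrite eq_sym.
- by rewrite -E.
- by rewrite -E.
Qed.

End Step.

Lemma sum_skip (s : seq vec) (X : vec -> vec) y : y \in s -> uniq s ->
  \sum_(b <- s) (if b == y then 0 else X b) = \sum_(b <- s) X b - X y.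
Proof.
move=> ys us; rewrite (bigD1_seq y) //= eqxx add0r [in RHS](bigD1_seq y) //=.
rewrite addrAC subrr add0r; apply: eq_bigr => b /negPf -> //.
Qed.

Lemma step V kap0 kap y : Inv V kap0 kap -> y \in V -> wk V kap0 y = 0 ->
  Inv V kap0 (remk V kap y) /\
  (forall b, remk V kap y (y, b) = 0 /\ remk V kap y (b, y) = 0).
Proof.
case=> k0 kirr ksupp kwr kw yV wy0.
have wy : wk V kap y = 0 by rewrite kw.
set kap' := remk V kap y.
have zy : forall b, kap' (y, b) = 0 /\ kap' (b, y) = 0.
  by move=> b; rewrite /kap' /remk /= eqxx ?orbT.
have Hpos : forall a b, 0 < kap' (a, b) ->
   [/\ a != y, b != y, a != b &
    0 < kap (a, b) \/ (0 < kap (a, y) /\ 0 < kap (y, b))].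
  move=> a b; rewrite /kap' /remk /=; case: ifP => [_|]; first by rewrite ltxx.
  move=> /negbT; rewrite !negb_or => /andP[/andP[ay b_y] ab] H.
  split => //.
  have := k0 (a, y); rewrite le_eqVlt => /orP[/eqP E|H1].
    by left; move: H; rewrite -E !mul0r addr0.
  have := k0 (y, b); rewrite le_eqVlt => /orP[/eqP E|H2].
    by left; move: H; rewrite -E mulr0 mul0r addr0.
  by right.
split => //; split.
- exact: remk_ge0.
- by move=> a; rewrite /kap' /remk /= eqxx !orbT.
- move=> a b /Hpos[_ _ _ [/ksupp //|[/ksupp[? _] /ksupp[_ ?]]]] //.
- move=> a b /Hpos[ay b_y ab H].
  have Hba : rch kap b a.
    case: H => [/kwr //|[H1 H2]].
    exact: rch_trans (kwr _ _ H2) (kwr _ _ H1).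
  exact: ((rch_lift k0 kirr ksupp Hba ay).1 b_y).
move=> a aV; rewrite -kw //.
case: (eqVneq a y) => [->|ay].
  by rewrite wy /wk big1 // => b _; rewrite (zy b).1 scale0r.
set K := Ksum V kap y.
set c := kap (a, y) / K.
have cK : c * K = kap (a, y).
  case: (eqVneq K 0) => [K0|Kn0]; last by rewrite /c mulfVK.
  rewrite K0 mulr0; apply/eqP; rewrite eq_le k0 /= leNgt; apply/negP => Hp.
  have [m Hm] : exists m, 0 < kap (y, m).
    by apply: (rch_first (kwr _ _ Hp)); rewrite eq_sym.
  have := Ksum_ge y k0 (ksupp _ _ Hm).2; rewrite -/K K0 => Hle.
  by move: (lt_le_trans Hm Hle); rewrite ltxx.
rewrite /wk.
rewrite (eq_bigr (fun b => if b == y then 0 else (kap (a, b) + c * kap (y, b)) *: (b - a))); last first.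
  move=> b _; rewrite /kap' /remk /= (negPf ay).
  case: (eqVneq b y) => [->|b_y]; first by rewrite /= scale0r.
  rewrite /=.
  case: (eqVneq a b) => [<-|ab]; first by rewrite subrr !scaler0.
  by rewrite /c mulrAC.
rewrite sum_skip //. set t := (X in _ - (_ + X) *: _).
have -> : t = 0 by apply/eqP; rewrite /t mulf_eq0; apply/orP; right; apply/eqP; exact: kirr.
rewrite addr0.
under eq_bigr do rewrite scalerDl -scalerA.
rewrite big_split /= -scaler_sumr.
have -> : \sum_(b <- V) kap (y, b) *: (b - a) = wk V kap y + K *: (y - a).
  rewrite /wk /K /Ksum scaler_suml -big_split /=; apply: eq_bigr => b _.
  by rewrite -scalerDr addrA subrK.
by rewrite wy add0r scalerA cK addrK.
exact: fset_uniq.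
Qed.

Lemma iter_rem V kap0 (L : seq vec) : Inv V kap0 kap0 -> {subset L <= V} ->
  (forall y, y \in L -> wk V kap0 y = 0) ->
  exists kap, Inv V kap0 kap /\
    (forall y, y \in L -> forall b, kap (y, b) = 0 /\ kap (b, y) = 0).
Proof.
move=> I0; elim: L => [|y L IH] sub wL; first by exists kap0.
have [kap [Ik Hz]] : exists kap, Inv V kap0 kap /\
    (forall y, y \in L -> forall b, kap (y, b) = 0 /\ kap (b, y) = 0).
  by apply: IH => z zL; [apply: sub | apply: wL]; rewrite in_cons zL orbT.
have [I' Hy] := step Ik (sub y (mem_head _ _)) (wL y (mem_head _ _)).
exists (remk V kap y); split => // z; rewrite in_cons => /orP[/eqP -> //|zL] b.
have [z1 z2] := Hz z zL b; have [z3 z4] := Hz z zL y.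
rewrite /remk /=; split; case: ifP => // _.
  by rewrite z1 z3 !mul0r addr0.
by rewrite z2 z4 mulr0 mul0r addr0.
Qed.

Lemma big_sub (T : eqType) (s t : seq T) (F : T -> vec) : uniq s -> uniq t ->
  {subset s <= t} -> \sum_(i <- s) F i = \sum_(i <- t | i \in s) F i.
Proof.
move=> us ut st; rewrite -[RHS]big_filter.
apply: perm_big; apply: uniq_perm => //.
  by rewrite filter_uniq.
by move=> x; rewrite mem_filter; case xs: (x \in s) => //=; rewrite st.
Qed.

Definition allp V := [seq (a, b) | a <- (V : seq vec), b <- (V : seq vec)].

Lemma allp_uniq V : uniq (allp V).
Proof. by apply: allpairs_uniq; [exact: fset_uniq|exact: fset_uniq|move=> -[? ?] [? ?] _ _]. Qed.

Lemma mem_allp V e : (e \in allp V) = (e.1 \in V) && (e.2 \in V).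
Proof.
apply/idP/idP.
  by case/allpairsP => -[a b] /= [aV bV ->]; rewrite aV bV.
by case/andP => aV bV; case: e aV bV => a b aV bV; apply: allpairs_f.
Qed.

Lemma sum_pairs (E : {fset vec * vec}) V (F : vec * vec -> vec) :
  (forall e, e \in E -> (e.1 \in V) && (e.2 \in V)) ->
  (forall e, e \in allp V -> e \notin E -> F e = 0) ->
  \sum_(e <- E) F e = \sum_(a <- V) \sum_(b <- V) F (a, b).
Proof.
move=> sub F0; rewrite -big_allpairs (@big_sub _ E (allp V)) //.
- by rewrite big_rmcond_in.
- by apply: allp_uniq.
- by move=> e eE; rewrite mem_allp sub.
Qed.

Definition kapof (H : network R d) (r : vec * vec -> R) (e : vec * vec) : R :=
  if e \in edges H then r e else 0.

Lemma field_kap (H : network R d) r V x :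
  (forall e, e \in edges H -> (e.1 \in V) && (e.2 \in V)) ->
  generated_field H r x = \sum_(a <- V) monom x a *: wk V (kapof H r) a.
Proof.
move=> sub; rewrite /generated_field.
rewrite (eq_big_seq (fun e => (kapof H r e * monom x (src e)) *: (tgt e - src e))); last first.
  by move=> e eE; rewrite /kapof eE.
rewrite (sum_pairs (V := V) (F := fun e => (kapof H r e * monom x (src e)) *: (tgt e - src e))) //.
  apply: eq_bigr => a _; rewrite /wk scaler_sumr; apply: eq_bigr => b _.
  by rewrite scalerA mulrC.
by move=> e _ eE; rewrite /kapof (negPf eE) mul0r scale0r.
Qed.

Lemma path_rch (H : network R d) r u p :
  (forall e, e \in edges H -> 0 < r e) ->
  path (fun u v => (u, v) \in edges H) u p -> rch (kapof H r) u (last u p).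
Proof.
move=> rpos; elim: p u => [|m p IH] u /=; first by move=> _; apply: rch0.
case/andP => um pm; apply: (rchS (m := m)); last exact: IH.
by rewrite /kapof um rpos.
Qed.

Lemma rch_path (H : network R d) kap u v :
  (forall a b, 0 < kap (a, b) -> (a, b) \in edges H) ->
  rch kap u v -> reaches H u v.
Proof.
move=> Hk; elim=> [a|a m b Ham _ [p [pp lp]]]; first by exists [::].
by exists (m :: p); split => //=; rewrite Hk.
Qed.

Lemma exists_max_cons (s : seq vec) (f : vec -> R) x :
  exists2 a, a \in x :: s & forall b, b \in x :: s -> f b <= f a.
Proof.
elim: s x => [|y s IH] x.
  by exists x; [rewrite mem_head | move=> b; rewrite inE => /eqP ->].
have [a aS Ha] := IH y.
case: (leP (f x) (f a)) => H.
  exists a; first by rewrite in_cons aS orbT.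
  by move=> b; rewrite in_cons => /orP[/eqP -> //|/Ha].
exists x; first by rewrite mem_head.
move=> b; rewrite in_cons => /orP[/eqP -> //|/Ha Hb].
exact: (le_trans Hb (ltW H)).
Qed.

Lemma exists_max (s : seq vec) (f : vec -> R) a0 : a0 \in s ->
  exists2 a, a \in s & forall b, b \in s -> f b <= f a.
Proof. by case: s => // x s _; apply: exists_max_cons. Qed.

Definition dot (u v : vec) : R := \sum_(i < d) u 0 i * v 0 i.

Lemma dot_sum (T : Type) (s : seq T) (a : vec) (F : T -> vec) :
  dot a (\sum_(t <- s) F t) = \sum_(t <- s) dot a (F t).
Proof.
rewrite /dot; under eq_bigr do rewrite summxE mulr_sumr.
by rewrite exchange_big.
Qed.

Lemma dotZ (a v : vec) k : dot a (k *: v) = k * dot a v.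
Proof. by rewrite /dot mulr_sumr; apply: eq_bigr => i _; rewrite mxE mulrCA. Qed.

Lemma dot0 (a : vec) : dot a 0 = 0.
Proof. by rewrite /dot big1 // => i _; rewrite mxE mulr0. Qed.

Lemma dot_key (a b : vec) :
  2 * dot a (b - a) = dot b b - dot a a - dot (b - a) (b - a).
Proof.
rewrite /dot mulr_sumr -!sumrB; apply: eq_bigr => i _; rewrite !mxE.
ring.
Qed.

Lemma dot_pos (v : vec) : v != 0 -> 0 < dot v v.
Proof.
move=> vn0.
have [i Hi] : exists i, v 0 i != 0.
  case: (boolP [exists i, v 0 i != 0]) => [/existsP[i Hi]|/existsPn Hn]; first by exists i.
  by move/negP: vn0; case; apply/eqP/rowP => j; rewrite mxE; apply/eqP; move: (Hn j); rewrite negbK.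
have H1 : 0 < v 0 i * v 0 i by rewrite -expr2 exprn_even_gt0.
have H2 : 0 <= \sum_(j < d | j != i) v 0 j * v 0 j.
  by apply: sumr_ge0 => j _; rewrite -expr2 sqr_ge0.
by rewrite /dot (bigD1 i) //=; apply: (lt_le_trans H1); rewrite lerDl.
Qed.

Lemma dot_ge0 (v : vec) : 0 <= dot v v.
Proof. by apply: sumr_ge0 => j _; rewrite -expr2 sqr_ge0. Qed.

Lemma node_nonzero V kap0 a m : Inv V kap0 kap0 -> a \in V ->
  (forall b, b \in V -> dot b b <= dot a a) -> 0 < kap0 (a, m) ->
  wk V kap0 a != 0.
Proof.
case=> k0 kirr ksupp _ _ aV Hmax Hm.
have mV := (ksupp _ _ Hm).2.
have ma : m != a by apply/eqP => E; move: Hm; rewrite E kirr ltxx.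
have Hneg : forall b, b \in V -> dot a (b - a) <= 0.
  move=> b bV; have := Hmax b bV; have := dot_key a b; have := @dot_ge0 (b - a).
  move=> h1 h2 h3; lra.
have Hm' : dot a (m - a) < 0.
  have := Hmax m mV; have := dot_key a m; have := @dot_pos (m - a).
  rewrite subr_eq0 ma => /(_ isT) h1 h2 h3; lra.
apply/eqP => w0.
have : dot a (wk V kap0 a) < 0.
  rewrite /wk dot_sum (bigD1_seq m) //= ?fset_uniq // dotZ.
  rewrite -[X in _ < X]addr0; apply: ltr_leD; first by rewrite pmulr_rlt0.
  rewrite big_seq_cond; apply: sumr_le0 => b /andP[bV _]; rewrite dotZ.
  by apply: mulr_ge0_le0 => //; apply: Hneg.
by rewrite w0 dot0 ltxx.
Qed.

End Net.

Local Open Scope fset_scope.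
Unset Implicit Arguments.
Theorem theorem4 (R : realType) (d : nat) (S : {fset 'rV[R]_d})
    (c : 'rV[R]_d -> 'rV[R]_d) :
  weakly_reversible_system (poly_field S c) ->
  exists (G : network R d) (k : 'rV[R]_d * 'rV[R]_d -> R),
    [/\ is_network G, weakly_reversible G, generates G k (poly_field S c) &
        source_nodes G = monomial_exponents S c].
Proof.
case=> G [k [HG HWR [Hk Hf]]].
case: (HG) => Vne Vnn Esub Eirr Einc.
set V := nodes G.
set kap0 := kapof G k.
have subE : forall e, e \in edges G -> (e.1 \in V) && (e.2 \in V).
  by move=> e /Esub[-> ->].
have I0 : Inv V kap0 kap0.
  split.
  - by move=> e; rewrite /kap0 /kapof; case: ifP => // /Hk /ltW.
  - move=> a; rewrite /kap0 /kapof; case: ifP => // /Eirr.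
    by rewrite /src /tgt /= eqxx.
  - by move=> a b; rewrite /kap0 /kapof; case: ifP => [/Esub //|]; rewrite ltxx.
  - move=> a b; rewrite /kap0 /kapof; case: ifP => [abE _|]; last by rewrite ltxx.
    have [p [pp lp]] := HWR _ abE; rewrite /src /tgt /= in pp lp.
    by rewrite -lp; apply: path_rch.
  - by [].
have Hf0 : forall x, nonneg_vec x ->
    \sum_(a <- V) monom x a *: wk V kap0 a = poly_field S c x.
  by move=> x xn; rewrite -(Hf x xn) (field_kap (V := V) k x subE).
have Hout : forall a, a \in V -> exists m, 0 < kap0 (a, m).
  move=> a aV; have [[s t] eE /orP[/eqP ea|/eqP ea]] := Einc a aV.
    by exists t; rewrite /kap0 /kapof -ea eE; apply: Hk.
  have := HWR _ eE; rewrite /src /tgt /= in ea *; rewrite ea => -[p [pp lp]].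
  apply: (rch_first (v := s)); first by rewrite -lp; apply: path_rch.
  by have := Eirr _ eE; rewrite /src /tgt /= ea eq_sym.
have [a0 a0V] : exists a0, a0 \in V by apply/fset0Pn.
have [amax amaxV Hmax] := exists_max (fun v => dot v v) a0V.
have [m Hm] := Hout amax amaxV.
have wne := node_nonzero I0 amaxV Hmax Hm.
set L := [seq y <- (V : seq _) | wk V kap0 y == 0].
have [kap [Ik Lz]] : exists kap, Inv V kap0 kap /\
    (forall y, y \in L -> forall b, kap (y, b) = 0 /\ kap (b, y) = 0).
  apply: iter_rem => // y; rewrite mem_filter => /andP[] //.
  by move=> /eqP.
case: (Ik) => k0 kirr ksupp kwr kw.
have irrP : forall a b, 0 < kap (a, b) -> b != a.
  by move=> a b H; apply/eqP => E; move: H; rewrite E kirr ltxx.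
have F1 : forall a, (exists b, 0 < kap (a, b)) <-> (a \in V) && (wk V kap0 a != 0).
  move=> a; split.
    move=> [b Hb]; have [aV _] := ksupp _ _ Hb; rewrite aV /=.
    apply/negP => /eqP w0.
    have aL : a \in L by rewrite mem_filter aV w0 eqxx.
    by move: Hb; rewrite (Lz a aL b).1 ltxx.
  case/andP => aV; rewrite -kw // => wn.
  case: (boolP (has (fun b => kap (a, b) != 0) V)) => [/hasP[b bV Hb]|/hasPn Hn].
    by exists b; rewrite lt_def Hb k0.
  move: wn; rewrite /wk big1_seq; first by rewrite eqxx.
  move=> b /andP[_ bV].
  by have := Hn b bV; rewrite negbK => /eqP ->; rewrite scale0r.
set E' := [fset e in allp V | 0 < kap e].
have memE : forall e, (e \in E') = (0 < kap e).
  move=> [a b]; rewrite !inE mem_allp /=.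
  by case H: (0 < kap (a, b)); rewrite ?andbF // andbT; have [-> ->] := ksupp _ _ H.
set N' := [fset src e | e in E'].
have srcN : forall a b, 0 < kap (a, b) -> a \in N'.
  by move=> a b H; apply/imfsetP; exists (a, b); rewrite ?memE.
exists (Network N' E'), kap.
have subE' : forall e, e \in edges (Network N' E') -> (e.1 \in V) && (e.2 \in V).
  by move=> [a b]; rewrite /= memE => /ksupp[/= -> ->].
split.
- split => /=.
  + apply/eqP => N0; have [b Hb] : exists b, 0 < kap (amax, b) by apply/(F1 amax); rewrite amaxV wne.
    by have := srcN _ _ Hb; rewrite N0 in_fset0.
  + move=> y /imfsetP[[a b]]; rewrite memE => He -> /=.
    by have [aV _] := ksupp _ _ He; apply: Vnn.
  + move=> [a b]; rewrite memE => H; split; first exact: srcN H.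
    have [m' Hm'] := rch_first (kwr _ _ H) (irrP _ _ H).
    exact: srcN Hm'.
  + move=> [a b]; rewrite memE => H; rewrite /src /tgt /= eq_sym; exact: irrP H.
  + by move=> y /imfsetP[e eE ->]; exists e => //; rewrite eqxx.
- move=> [a b]; rewrite /= memE => H; apply: (rch_path _ (kwr _ _ H)).
  by move=> u v; rewrite /= memE.
- split; first by move=> e; rewrite /= memE.
  move=> x xn; rewrite -Hf0 // (field_kap (V := V) kap x subE').
  apply: eq_big_seq => a aV; congr (_ *: _); rewrite -kw //.
  apply: eq_bigr => b _; rewrite /kapof /= memE; case: ifP => // H.
  have -> : kap (a, b) = 0 by apply/eqP; rewrite eq_le k0 andbT leNgt H.
  by rewrite scale0r.
set U := S `|` V.
pose g := fun y : 'rV[R]_d =>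
  (if y \in S then c y else 0) - (if y \in V then wk V kap0 y else 0).
have HU : forall y, y \in U -> g y = 0.
  apply: LI; first exact: fset_uniq.
  move=> x xn; rewrite /g.
  under eq_bigr do rewrite scalerBr.
  rewrite sumrB.
  have E1 : \sum_(y <- U) monom x y *: (if y \in S then c y else 0) = poly_field S c x.
    rewrite /poly_field (big_sub (s := S) (t := U)) ?fset_uniq //; last first.
      by move=> y yS; rewrite in_fsetU yS.
    rewrite [RHS]big_mkcond; apply: eq_bigr => y _; case: ifP => _ //.
    by rewrite scaler0.
  have E2 : \sum_(y <- U) monom x y *: (if y \in V then wk V kap0 y else 0) =
      poly_field S c x.
    rewrite -(Hf0 x xn) (big_sub (s := V) (t := U)) ?fset_uniq //; last first.
      by move=> y yV; rewrite in_fsetU yV orbT.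
    rewrite [RHS]big_mkcond; apply: eq_bigr => y _; case: ifP => _ //.
    by rewrite scaler0.
  by rewrite E1 E2 subrr.
apply/fsetP => y; rewrite /source_nodes /monomial_exponents /=.
have -> : (y \in [fset src e | e in E']) = (y \in V) && (wk V kap0 y != 0).
  apply/idP/idP.
    move=> /imfsetP[[a b]]; rewrite memE => H -> /=.
    by apply/(F1 a); exists b.
  by move=> /(F1 y)[b Hb]; apply: srcN Hb.
rewrite !inE.
case yU : (y \in U); last first.
  move: yU; rewrite in_fsetU => /negbT; rewrite negb_or => /andP[/negPf -> /negPf ->].
  by [].
have := HU y yU; rewrite /g => /eqP; rewrite subr_eq0 => /eqP.
by case: (y \in S); case: (y \in V) => /= E; rewrite ?E ?eqxx // -E eqxx.
Qed.
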